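(* Let $S$ be a finite set of points in the plane and let $\mathcal D$ be a set of $k$ pairwise non-opposite directions such that $S$ is in $\mathcal D$-general position. If $T$ is a $\mathcal D$-monotone geometric spanning tree of $S$, then $T$ has at most $2k$ leaves.
   Context: A direction is a unit vector in $\mathbb{R}^2$; two directions $d,d'$ are opposite if $d'=-d$. A finite point set $S$ is in $d$-general position if no two points of $S$ lie on a common line orthogonal to $d$; $S$ is in $\mathcal D$-general position if it is in $d$-general position for every $d\in\mathcal D$. A geometric path $\langle p_1,\dots,p_r\rangle$ is $d$-monotone if its vertex set is in $d$-general position and $\langle p_1,d\rangle,\dots,\langle p_r,d\rangle$ is strictly increasing or strictly decreasing. A geometric spanning tree of $S$ is a tree with vertex set $S$ whose edges are straight segments; it is $\mathcal D$-monotone if for every pair of vertices $u,v$ there is $d\in\mathcal D$ such that the path of $T$ from $u$ to $v$ is $d$-monotone. *)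

(* Defs.v *)
From mathcomp Require Import all_boot all_order all_algebra.
Set Implicit Arguments. Unset Strict Implicit. Unset Printing Implicit Defensive.
Import Order.TTheory GRing.Theory Num.Theory.
Local Open Scope ring_scope.

Definition dot (R : realFieldType) (p q : R * R) : R := p.1 * q.1 + p.2 * q.2.

Definition is_direction (R : realFieldType) (d : R * R) : bool :=
  d.1 ^+ 2 + d.2 ^+ 2 == 1.

Definition opposite (R : realFieldType) (d d' : R * R) : bool :=
  d' == (- d.1, - d.2).

Definition dgen_pos (R : realFieldType) (d : R * R) (s : seq (R * R)) : Prop :=
  forall p q, p \in s -> q \in s -> p != q -> dot p d != dot q d.

Definition dmonotone (R : realFieldType) (d : R * R) (s : seq (R * R)) : Prop :=
  dgen_pos d s /\
  (sorted (fun x y => x < y) [seq dot p d | p <- s] \/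
   sorted (fun x y => x > y) [seq dot p d | p <- s]).

Definition simple_graph (V : finType) (e : rel V) : Prop :=
  symmetric e /\ irreflexive e.

Definition simple_path (V : finType) (e : rel V) (u v : V) (p : seq V) : Prop :=
  [/\ path e u p, uniq (u :: p) & last u p = v].

Definition acyclic (V : finType) (e : rel V) : Prop :=
  forall c : seq V, uniq c -> (3 <= size c)%N -> ~~ cycle e c.

Definition is_tree (V : finType) (e : rel V) : Prop :=
  [/\ simple_graph e, (forall u v, connect e u v) & acyclic e].

Definition degree (V : finType) (e : rel V) (v : V) : nat := #|[set w | e v w]|.

Definition leaves (V : finType) (e : rel V) : {set V} := [set v | degree e v == 1%N].

(* A geometric spanning tree of S: vertices V embedded injectively by pos
   (S = image of pos), edges e forming a tree (drawn as straight segments).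
   It is D-monotone if for every pair u,v of vertices, some d in D makes the
   tree path from u to v d-monotone (the tree path being the unique simple path). *)
Definition D_monotone_tree (R : realFieldType) (V : finType) (pos : V -> R * R)
  (e : rel V) (D : seq (R * R)) : Prop :=
  forall u v : V, exists2 d, d \in D &
    forall p : seq V, simple_path e u v p -> dmonotone d [seq pos x | x <- u :: p].

(* Main.v *)
Require Import Defs.
From mathcomp Require Import all_boot all_order all_algebra.
From mathcomp Require Import ring lra zify.
Import Order.TTheory GRing.Theory Num.Theory.
Local Open Scope ring_scope.

Definition pat {R : realFieldType} (D : seq (R*R)) (x : R * R) : seq bool :=
  [seq (0 < dot x d) | d <- D].
Definition okv {R : realFieldType} (D : seq (R*R)) (x : R * R) : bool :=
  all (fun d => dot x d != 0) D.

Lemma map_eq_in {T U : eqType} {D : seq T} {f g : T -> U} :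
  map f D = map g D -> forall d, d \in D -> f d = g d.
Proof.
elim: D => //= a D IH [Ha HD] d; rewrite inE => /orP [/eqP->//|]; exact: IH.
Qed.

Lemma prod_sign {R : realFieldType} {a b : R} : 0 < a * b -> (0 < a) = (0 < b).
Proof. move=> H; apply/idP/idP => Ha; nra. Qed.

Lemma lag {R : realFieldType} (z d d' : R * R) :
  (d.1^+2 + d.2^+2) * dot z d' =
  (z.2*d.1 - z.1*d.2) * dot (- d.2, d.1) d' + dot z d * dot d d'.
Proof. rewrite /dot /=; ring. Qed.

Lemma npos {R : realFieldType} {x d : R * R} : dot x d != 0 -> 0 < d.1^+2 + d.2^+2.
Proof.
move=> H; rewrite lt_def paddr_eq0 ?sqr_ge0 // ?addr_ge0 ?sqr_ge0 // andbT.
apply/negP => /andP [/eqP h1 /eqP h2]; move: H; rewrite /dot.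
move/eqP: h1; rewrite sqrf_eq0 => /eqP ->; move/eqP: h2; rewrite sqrf_eq0 => /eqP ->.
by rewrite !mulr0 addr0 eqxx.
Qed.

Lemma cross_le2 (R : realFieldType) (d d0 : R*R) (D' : seq (R*R)) (Q : seq (seq bool)) :
  d0 \in D' -> uniq Q ->
  (forall q, q \in Q -> exists x y, [/\ okv D' x, okv D' y, pat D' x = q, pat D' y = q &
                           0 < dot x d /\ dot y d < 0]) ->
  (size Q <= 2)%N.
Proof.
move=> d0in uQ HQ; rewrite leqNgt; apply/negP => Hs.
have mkz : forall i, (i < size Q)%N -> exists z,
    [/\ okv D' z, pat D' z = nth [::] Q i & dot z d = 0].
  move=> i Hi; have [x [y [okx oky px py [xd yd]]]] := HQ _ (mem_nth [::] Hi).
  exists (dot x d * y.1 + (- dot y d) * x.1, dot x d * y.2 + (- dot y d) * x.2).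
  have dz : forall d', dot (dot x d * y.1 + (- dot y d) * x.1,
                            dot x d * y.2 + (- dot y d) * x.2) d'
                = dot x d * dot y d' + (- dot y d) * dot x d'.
    by move=> d'; rewrite /dot /=; ring.
  have key : forall d', d' \in D' ->
      (0 < dot x d' /\ 0 < dot y d') \/ (dot x d' < 0 /\ dot y d' < 0).
    move=> d' Hd'.
    have bx : (0 < dot x d') = (0 < dot y d') := map_eq_in (etrans px (esym py)) d' Hd'.
    have nx : dot x d' != 0 by move/allP: okx => /(_ d' Hd').
    have ny : dot y d' != 0 by move/allP: oky => /(_ d' Hd').
    move: nx ny bx; rewrite !neq_lt => /orP [h1|h1] /orP [h2|h2] bx;
      first [by right; split | by left; split | by move: bx; rewrite (lt_gtF h1) h2 | by move: bx; rewrite (lt_gtF h2) h1].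
  split.
  - apply/allP => d' Hd'; rewrite dz; case: (key d' Hd') => [[h1 h2]|[h1 h2]];
      rewrite neq_lt; apply/orP; [right|left]; nra.
  - rewrite -px /pat; apply/eq_in_map => d' Hd'; rewrite dz.
    case: (key d' Hd') => [[h1 h2]|[h1 h2]].
      rewrite h1; apply/idP; nra.
    rewrite (lt_gtF h1); apply/negbTE; rewrite -leNgt; nra.
  - rewrite dz; ring.
have [x0 [y0 [_ _ _ _ [x0d _]]]] := HQ _ (mem_nth [::] (leq_ltn_trans (isT : (0 <= 2)%N) Hs)).
have nP := npos (lt0r_neq0 x0d).
set n := d.1^+2 + d.2^+2 in nP.
set c := fun z : R * R => z.2*d.1 - z.1*d.2.
have cnz : forall z, okv D' z -> dot z d = 0 -> c z != 0.
  move=> z okz zd; apply/eqP => cz.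
  have := lag z d d0; rewrite zd -/n mul0r addr0 -/(c z) cz mul0r => /eqP.
  rewrite mulf_eq0 (gt_eqF nP) /=; move/allP: okz => /(_ d0 d0in) /negbTE ->.
  done.
have same : forall z1 z2, okv D' z1 -> okv D' z2 -> dot z1 d = 0 -> dot z2 d = 0 ->
    0 < c z1 * c z2 -> pat D' z1 = pat D' z2.
  move=> z1 z2 ok1 ok2 d1 d2 cc; apply/eq_in_map => d' Hd'.
  have n1 : dot z1 d' != 0 by move/allP: ok1 => /(_ d' Hd').
  have n2 : dot z2 d' != 0 by move/allP: ok2 => /(_ d' Hd').
  have l1 := lag z1 d d'; have l2 := lag z2 d d'.
  rewrite d1 mul0r addr0 -/n -/(c z1) in l1.
  rewrite d2 mul0r addr0 -/n -/(c z2) in l2.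
  apply: prod_sign.
  set E := dot (- d.2, d.1) d' in l1 l2.
  have En : E != 0.
    apply/eqP => E0; move: l1; rewrite E0 mulr0 => /eqP; rewrite mulf_eq0 (gt_eqF nP).
    by rewrite (negbTE n1).
  have E2 : 0 < E * E by rewrite lt_def mulf_neq0 // -expr2 sqr_ge0.
  have : 0 < (n * dot z1 d') * (n * dot z2 d').
    rewrite l1 l2; have -> : c z1 * E * (c z2 * E) = (c z1 * c z2) * (E * E) by ring.
    exact: mulr_gt0.
  have -> : n * dot z1 d' * (n * dot z2 d') = (n * n) * (dot z1 d' * dot z2 d') by ring.
  by rewrite pmulr_rgt0 // mulr_gt0.
have [z0 [ok0 p0 e0]] := mkz 0%N (leq_ltn_trans (isT : (0 <= 2)%N) Hs).
have [z1 [ok1 p1 e1]] := mkz 1%N (leq_ltn_trans (isT : (1 <= 2)%N) Hs).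
have [z2 [ok2 p2 e2]] := mkz 2%N Hs.
have c0 := cnz _ ok0 e0; have c1 := cnz _ ok1 e1; have c2 := cnz _ ok2 e2.
have neq : forall i j, (i < 3)%N -> (j < 3)%N -> i != j -> nth [::] Q i != nth [::] Q j.
  move=> i j Hi Hj; rewrite nth_uniq //; exact: leq_trans Hs.
have : 0 < c z0 * c z1 \/ 0 < c z0 * c z2 \/ 0 < c z1 * c z2.
  move: c0 c1 c2; rewrite !neq_lt => /orP [h0|h0] /orP [h1|h1] /orP [h2|h2];
    first [left; nra | right; left; nra | right; right; nra].
case=> [h|[h|h]].
- by move: (neq 0%N 1%N isT isT isT); rewrite -p0 -p1 (same _ _ ok0 ok1 e0 e1 h) eqxx.
- by move: (neq 0%N 2%N isT isT isT); rewrite -p0 -p2 (same _ _ ok0 ok2 e0 e2 h) eqxx.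
- by move: (neq 1%N 2%N isT isT isT); rewrite -p1 -p2 (same _ _ ok1 ok2 e1 e2 h) eqxx.
Qed.
Lemma count_pat (R : realFieldType) (D : seq (R*R)) (P : seq (seq bool)) : uniq P ->
  (forall p, p \in P -> exists x, okv D x /\ pat D x = p) ->
  (size P <= maxn 1 (2 * size D))%N.
Proof.
elim: D P => [|d D' IH] P uP HP.
  rewrite /=; apply: (@uniq_leq_size _ P [:: [::]]) => // p /HP [x [_ <-]].
  by rewrite inE.
have HP' : forall p, p \in P -> exists x, [/\ okv D' x, dot x d != 0 &
                  p = (0 < dot x d) :: pat D' x].
  move=> p /HP [x [okx <-]]; exists x; move: okx => /= /andP [h1 h2]; by split.
pose Pt := [seq behead p | p <- P & head false p].
pose Pf := [seq behead p | p <- P & ~~ head false p].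
have sP : size P = (size Pt + size Pf)%N.
  by rewrite !size_map !size_filter -(count_predC (fun p => head false p)).
have uT : uniq Pt.
  rewrite map_inj_in_uniq ?filter_uniq // => p1 p2.
  rewrite !mem_filter => /andP [h1 /HP' [x1 [_ _ e1]]] /andP [h2 /HP' [x2 [_ _ e2]]].
  rewrite e1 e2 /= in h1 h2 *; move=> ->; by rewrite h1 h2.
have uF : uniq Pf.
  rewrite map_inj_in_uniq ?filter_uniq // => p1 p2.
  rewrite !mem_filter => /andP [h1 /HP' [x1 [_ _ e1]]] /andP [h2 /HP' [x2 [_ _ e2]]].
  rewrite e1 e2 /= in h1 h2 *; move=> ->; by rewrite (negbTE h1) (negbTE h2).
have rT : forall q, q \in Pt -> exists x, [/\ okv D' x, pat D' x = q & 0 < dot x d].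
  move=> q /mapP [p]; rewrite mem_filter => /andP [h /HP' [x [okx _ ex]]] ->.
  by exists x; move: h; rewrite ex /=.
have rF : forall q, q \in Pf -> exists x, [/\ okv D' x, pat D' x = q & dot x d < 0].
  move=> q /mapP [p]; rewrite mem_filter => /andP [h /HP' [x [okx nx ex]]] ->.
  exists x; move: h; rewrite ex /= => h; split => //.
  by rewrite lt_neqAle nx /= leNgt.
pose Pu := Pt ++ [seq q <- Pf | q \notin Pt].
pose Pi := [seq q <- Pf | q \in Pt].
have sTF : (size Pt + size Pf = size Pu + size Pi)%N.
  rewrite size_cat !size_filter -addnA; congr (_ + _)%N.
  by rewrite addnC -(count_predC (mem Pt)).
have uU : uniq Pu.
  rewrite cat_uniq uT filter_uniq // andbT; apply/hasPn => q.
  by rewrite mem_filter => /andP [].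
have rU : forall p, p \in Pu -> exists x, okv D' x /\ pat D' x = p.
  move=> p; rewrite mem_cat => /orP [/rT [x [? ? _]]|].
    by exists x.
  by rewrite mem_filter => /andP [_ /rF [x [? ? _]]]; exists x.
have bU := IH _ uU rU.
rewrite sP sTF.
case: D' IH HP HP' rT rF rU bU => [|d0 D''] IH HP HP' rT rF rU bU.
  have bF : (size Pi <= 1)%N.
    apply: leq_trans (IH _ uF _); first by rewrite size_filter count_size.
    by move=> p /rF [x [? ? _]]; exists x.
  move: bU bF; rewrite /=; lia.
have bI : (size Pi <= 2)%N.
  apply: (@cross_le2 R d d0 (d0 :: D'')); first by rewrite inE eqxx.
    exact: filter_uniq.
  move=> q; rewrite mem_filter => /andP [/rT [x [? ? ?]] /rF [y [? ? ?]]].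
  by exists x, y; split.
move: bU bI; rewrite /=; lia.
Qed.
Theorem lemma7 (R : realFieldType) (V : finType) (pos : V -> R * R)
  (e : rel V) (D : seq (R * R)) :
  injective pos ->
  uniq D ->
  (forall d, d \in D -> is_direction d) ->
  (forall d d', d \in D -> d' \in D -> ~~ opposite d d') ->
  (forall d, d \in D -> dgen_pos d [seq pos x | x <- enum V]) ->
  is_tree e ->
  D_monotone_tree pos e D ->
  (#|leaves e| <= 2 * size D)%N.
Proof.
move=> injpos _ _ _ gen [[esym eirr] conn _] mono.
case: D gen mono => [|d1 D1] gen mono.
  rewrite leqn0 cards_eq0; apply/eqP/setP => u; rewrite !inE; apply/negbTE.
  apply/negP => _; have [d] := mono u u; by rewrite in_nil.
set D := d1 :: D1.
pose nbr v := odflt v [pick w | e v w].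
have leafE : forall v w, v \in leaves e -> e v w -> forall w', e v w' -> w' = w.
  move=> v w; rewrite inE => /cards1P [a Ha] evw w' evw'.
  have : w \in [set x | e v x] by rewrite inE.
  have : w' \in [set x | e v x] by rewrite inE.
  by rewrite Ha !inE => /eqP -> /eqP ->.
have nbrE : forall v w, v \in leaves e -> e v w -> nbr v = w.
  move=> v w Hv evw; rewrite /nbr; case: pickP => [a Ha|H] /=.
    exact: (leafE v w Hv evw).
  by rewrite H in evw.
have nbrN : forall v, v \in leaves e -> e v (nbr v).
  move=> v; rewrite inE => /cards1P [a Ha].
  have : a \in [set x | e v x] by rewrite Ha inE.
  rewrite inE => eva; rewrite /nbr; case: pickP => [b Hb|H] //=.
  by rewrite H in eva.
pose vec v := ((pos (nbr v)).1 - (pos v).1, (pos (nbr v)).2 - (pos v).2).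
have dotvec : forall v d, dot (vec v) d = dot (pos (nbr v)) d - dot (pos v) d.
  by move=> v d; rewrite /dot /=; ring.
have okvec : forall v, v \in leaves e -> okv D (vec v).
  move=> v Hv; apply/allP => d Hd; rewrite dotvec subr_eq0.
  apply: (gen d Hd); try exact: map_f (mem_enum _ _).
  apply/eqP => /injpos h; move: (nbrN v Hv); rewrite h.
  by rewrite eirr.
have injl : {in leaves e &, injective (fun v => pat D (vec v))}.
  move=> u v Hu Hv Hpat; case: (eqVneq u v) => // Huv; exfalso.
  have [p Pp] : exists p, simple_path e u v p.
    case/connectP: (conn u v) => p pth lst.
    rewrite lst; case/shortenP: pth => p' pth' uq _.
    by exists p'; split.
  have [d dD Hm] := mono u v.
  case: (Hm p Pp) => _ srt.
  case: Pp => pth _ lst.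
  case: p pth lst srt => [|w p1] pth lst srt.
    by move: Huv; rewrite -lst /= eqxx.
  have euw : e u w by case/andP: pth.
  have Hp : w :: p1 = rcons (belast w p1) v by rewrite lastI -lst.
  set s := belast w p1 in Hp.
  rewrite Hp rcons_path in pth; case/andP: pth => _ etv.
  rewrite esym in etv.
  have nu := nbrE u w Hu euw.
  have nv := nbrE v _ Hv etv.
  have bit : (0 < dot (vec u) d) = (0 < dot (vec v) d) := map_eq_in Hpat d dD.
  rewrite !dotvec nu nv !subr_gt0 in bit.
  have first_ : forall (r : rel R), sorted r [seq dot p d | p <- [seq pos x | x <- u :: w :: p1]] -> r (dot (pos u) d) (dot (pos w) d).
    by move=> r /= /andP [].
  have last_ : forall (r : rel R), sorted r [seq dot p d | p <- [seq pos x | x <- u :: w :: p1]] -> r (dot (pos (last u s)) d) (dot (pos v) d).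
    move=> r; rewrite Hp /= !map_rcons rcons_path => /andP [_].
    by rewrite -map_comp (last_map ((fun p => dot p d) \o pos)).
  case: srt => srt.
    have h1 := first_ _ srt; have h2 := last_ _ srt.
    by move: bit; rewrite h1 (lt_gtF h2).
  have h1 := first_ _ srt; have h2 := last_ _ srt.
  by move: bit; rewrite h2 (lt_gtF h1).
have := @count_pat R D [seq pat D (vec v) | v <- enum (leaves e)].
rewrite size_map -cardE map_inj_in_uniq ?enum_uniq; last first.
  by move=> u v; rewrite !mem_enum; exact: injl.
move=> /(_ isT) H.
have : (#|leaves e| <= maxn 1 (2 * size D))%N.
  apply: H => p /mapP [v]; rewrite mem_enum => Hv ->.
  by exists (vec v); split => //; exact: okvec.
rewrite /D /=; lia.
Qed.
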